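(* Let $r_0>0$, let $q\colon\mathbb{R}\to[0,+\infty)$ be continuous with $\limsup_{|y|\to+\infty}q(y)/|y|<1$, and let $D_q:=\{z\in\mathbb{C}:-q(\mathrm{Im}\,z)<\mathrm{Re}\,z<q(\mathrm{Im}\,z)\}$. Let $\mu_0$ be a positive Borel measure on $\mathbb{C}$ with support contained in the closure of $D_q$, and set $\mu_0^i(y):=\mu_0(\{z:|\mathrm{Im}\,z|\le y\})$ for $y\ge0$; assume there is a constant $C$ with $\mu_0^i(y)\le Cy$ for all $y\ge0$. Put $Q(y):=q(y)+q(-y)$, $y\ge0$. Then there is $C_0\ge0$ such that for all $r_0\le r<R<+\infty$ $$l^{\mathrm{rh}}_{\mu_0}(r,R)\le\int_r^R\frac{Q(y)}{y^2}\,d\mu_0^i(y)+C_0.$$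
   Context: $l^{\mathrm{rh}}_{\mu_0}(r,R):=\int_{r<|z|\le R,\ \mathrm{Re}\,z>0}\mathrm{Re}\frac1z\,d\mu_0(z)$. The Stieltjes integral $\int_r^R\dots d\mu_0^i$ is taken over the interval $(r,R]$. *)

(* Defs.v *)
From HB Require Import structures.
From mathcomp Require Import all_boot all_order all_algebra.
From mathcomp Require Import all_classical all_reals all_analysis.
Set Implicit Arguments. Unset Strict Implicit. Unset Printing Implicit Defensive.
Import Order.TTheory GRing.Theory Num.Theory.
Import numFieldNormedType.Exports.
Local Open Scope classical_set_scope.
Local Open Scope ring_scope.

(* The complex plane is modelled as R * R, z = (Re z, Im z) = (z.1, z.2);
   its measurable structure is the product (= Borel) sigma-algebra,
   its topology the product (= Euclidean) topology. *)

Definition Dq (R : realType) (q : R -> R) : set (R * R) :=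
  [set z | - q z.2 < z.1 < q z.2].

Definition cabs (R : realType) (z : R * R) : R := Num.sqrt (z.1 ^+ 2 + z.2 ^+ 2).

Definition Re_inv (R : realType) (z : R * R) : R := z.1 / (z.1 ^+ 2 + z.2 ^+ 2).

Definition mu_i (R : realType) (mu0 : set (R * R) -> \bar R) (y : R) : \bar R :=
  mu0 [set z | `|z.2| <= y].

Definition lrh_set (R : realType) (r R' : R) : set (R * R) :=
  [set z : R * R | r < cabs z <= R' /\ 0 < z.1].

Definition lrh (R : realType) (mu0 : {measure set (R * R) -> \bar R}) (r R' : R)
  : \bar R :=
  (\int[mu0]_(z in lrh_set r R') (Re_inv z)%:E)%E.

(* Main.v *)
Require Import Defs.
From HB Require Import structures.
From mathcomp Require Import all_boot all_order all_algebra.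
From mathcomp Require Import all_classical all_reals all_analysis.
From mathcomp Require Import lra unstable measurable_realfun.
Import Order.TTheory GRing.Theory Num.Theory.
Import numFieldNormedType.Exports.
Local Open Scope classical_set_scope.
Local Open Scope ring_scope.
Lemma open_measurableRR (R : realType) (U : set (R * R)) : open U -> measurable U.
Proof.
move=> oU.
pose box (p : rat * rat * rat) : set (R * R) :=
  `]ratr p.1.1 - ratr p.2, ratr p.1.1 + ratr p.2[ `*`
  `]ratr p.1.2 - ratr p.2, ratr p.1.2 + ratr p.2[.
pose P := [set p : rat * rat * rat | box p `<=` U].
have -> : U = \bigcup_(p in P) box p.
  apply/seteqP; split; last by move=> z [p Pp /Pp].
  move=> z Uz.
  have := oU z Uz; rewrite /= nbhs_ballP => -[e /= e0 beU].
  have [a /andP[a0 ae]] : exists a : rat, (0 < (ratr a : R) < e / 2).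
    have := @rat_in_itvoo R 0 (e / 2); rewrite divr_gt0// => /(_ isT) [a].
    by rewrite in_itv /= => H; exists a.
  have [b1 Hb1] := @rat_in_itvoo R (z.1 - ratr a) (z.1 + ratr a) ltac:(by rewrite ltrBlDr -addrA ltrDl addr_gt0).
  have [b2 Hb2] := @rat_in_itvoo R (z.2 - ratr a) (z.2 + ratr a) ltac:(by rewrite ltrBlDr -addrA ltrDl addr_gt0).
  move: Hb1 Hb2; rewrite !in_itv /= => /andP[h1 h2] /andP[h3 h4].
  exists (b1, b2, a); last first.
    by rewrite /box /= !in_itv /=; split; apply/andP; split; lra.
  move=> w; rewrite /box /= !in_itv /= => -[/andP[w1 w2] /andP[w3 w4]].
  apply: beU; split; rewrite /ball /= /ball /=; rewrite ltr_norml; apply/andP; split; lra.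
rewrite bigcup_mkcond; apply: countable_bigcupT_measurable; first exact: countableP.
move=> p; case: ifPn => _ //; apply: measurableX => //.
Qed.
Lemma measurable_invR (R : realType) : measurable_fun [set: R] (@GRing.inv R).
Proof.
have -> : [set: R] = [set~ 0] `|` [set 0] by rewrite setUC setUv.
apply/measurable_funU => //.
  by apply: measurableC.
split.
- apply: measurable_realfun.open_continuous_measurable_fun.
    apply: closed_openC; exact: closed_eq.

  move=> x; rewrite inE => x0; apply: inv_continuous; exact/eqP.
- by apply: measurable_fun_set1.
Qed.
Lemma closure_Dq_le (R : realType) (q : R -> R) : continuous q ->
  closure (Dq q) `<=` [set z | z.1 <= q z.2].
Proof.
move=> cq z cz /=; rewrite leNgt; apply/negP => hz.
set d := z.1 - q z.2.
have d0 : 0 < d by rewrite subr_gt0.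
have d20 : 0 < d / 2 by rewrite divr_gt0.
have /nbhs_ballP[e /= e0 he] : nbhs z.2 (q @^-1` ball (q z.2) (d / 2)).
  by apply: (cq z.2); apply: nbhsx_ballx.
have hB : nbhs z (ball z (Num.min e (d / 2))).
  by apply: nbhsx_ballx; rewrite lt_min e0 d20.
have [w [/andP[Dw1 Dw2] [bw1 bw2]]] := cz _ hB.
have me : Num.min e (d/2) <= e by rewrite ge_min lexx.
have md : Num.min e (d/2) <= d / 2 by rewrite ge_min lexx orbT.
have := he w.2; rewrite /= => /(_ (le_ball me bw2)).
move: (le_ball md bw1).
rewrite /ball /= ltr_norml ltr_norml => /andP[h1 h2] /andP[h3 h4].
rewrite /d in h1 h2 h3 h4.
lra.
Qed.
Lemma LS_itv (R : realType) (F : cumulative R R) (a b : R) : a <= b ->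
  lebesgue_stieltjes_measure F (`]a, b]%classic : set (measurableTypeR R)) = (F b - F a)%:E.
Proof.
move=> ab.
rewrite /lebesgue_stieltjes_measure /measure_extension /=.
rewrite measurable_mu_extE /=; last exact: is_ocitv.
exact: wlength_itv_bnd.
Qed.

Lemma mset_le (R : realType) (y : R) : measurable [set z : R * R | `|z.2| <= y].
Proof.
have h : measurable_fun setT (fun z : R * R => `|z.2|).
  by apply: measurableT_comp; [exact: measurable_realfun.normr_measurable|exact: measurable_snd].
rewrite (_ : [set z | _] = (fun z : R * R => `|z.2|) @^-1` `]-oo, y]).
  by rewrite -[X in measurable X]setTI; apply: h => //; exact: measurable_itv.
by apply/seteqP; split => z; rewrite /= in_itv /=.
Qed.

Lemma LS_push (R : realType) (F : cumulative R R) (mu0 : {measure set (R * R) -> \bar R})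
  (r R' : R) : 0 < r -> (forall y, 0 <= y -> (F y)%:E = mu_i mu0 y) ->
  forall A : set (measurableTypeR R), measurable A -> A `<=` `]r, R'] ->
  lebesgue_stieltjes_measure F A =
  pushforward mu0 (fun z : R * R => (`|z.2| : measurableTypeR R)) A.
Proof.
move=> r0 FE A mA AD.
have mphi : measurable_fun setT (fun z : R * R => (`|z.2| : measurableTypeR R)).
  have h : measurable_fun setT (fun z : R * R => `|z.2|).
    by apply: measurableT_comp; [exact: measurable_realfun.normr_measurable|exact: measurable_snd].
  exact: h.
have mD : measurable (`]r, R']%classic : set (measurableTypeR R)).
  by apply: sub_sigma_algebra; exact: is_ocitv.
rewrite -(setIidl AD).
pose m1 := mrestr (lebesgue_stieltjes_measure F) mD.
pose m2 := mrestr (pushforward mu0 (fun z : R * R => (`|z.2| : measurableTypeR R))) mD.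
suff: forall X, measurable X -> m1 X = m2 X by apply.
move=> X mX.
apply: (@measure_unique _ R (measurableTypeR R) (R.-ocitv.-measurable) (fun k : nat => `](- k%:R), k%:R]%classic) _ _ _ _ m1 m2 _ _ X mX).
- by [].
- by move=> X1 Y1 mX1 mY1; apply: measurableI.
- by move=> k; exact: is_ocitv.
- apply/seteqP; split => // x _ /=.
  by exists (Num.bound x); rewrite //= in_itv/= ltrNl ltrNbound ltW// ltr_bound.
- move=> _ [[a b] _ <-] /=.
  rewrite /m1 /m2 /mrestr /=.
  set c := Order.max a r; set d := Order.min b R'.
  have -> : `]a, b]%classic `&` `]r, R']%classic = `]c, d]%classic :> set R.
    apply/seteqP; split => x /=; rewrite !in_itv /= gt_max le_min.
      by move=> [/andP[-> ->] /andP[-> ->]].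
    by move=> /andP[/andP[h1 h2] /andP[h3 h4]]; rewrite h1 h2 h3 h4.
  have cr : r <= c by rewrite le_max lexx orbT.
  have [cd|dc] := leP c d; last first.
    have -> : `]c, d]%classic = set0 :> set R.
      by apply/seteqP; split => x //=; rewrite in_itv /= => /andP[h1 h2]; lra.
    by rewrite !measure0.
  rewrite LS_itv // /pushforward.
  have -> : (fun z : R * R => `|z.2|) @^-1` `]c, d] =
     [set z : R * R | `|z.2| <= d] `\` [set z : R * R | `|z.2| <= c].
    apply/seteqP; split => z /=; rewrite in_itv /=.
      by move=> /andP[h1 h2]; split => //; apply/negP; rewrite -ltNge.
    by move=> [h1 /negP]; rewrite -ltNge => ->.
  have Fd : (F d)%:E = mu0 [set z : R * R | `|z.2| <= d] by apply: FE; lra.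
  have Fc : (F c)%:E = mu0 [set z : R * R | `|z.2| <= c] by apply: FE; lra.
  rewrite measureD; [|exact: mset_le|exact: mset_le|].
    rewrite (_ : _ `&` _ = [set z : R * R | `|z.2| <= c]); last first.
      apply/seteqP; split => z /=; first by case.
      by move=> h; split => //; exact: le_trans h cd.
    by rewrite EFinB Fd Fc.
  by move: (ltry (F d)); rewrite Fd.
- move=> k; rewrite /m1 /mrestr /=.
  apply: (@le_lt_trans _ _ (lebesgue_stieltjes_measure F `](- k%:R), k%:R]%classic)).
    apply: le_measure; rewrite ?inE; last exact: subIsetl.
      by apply: measurableI => //; apply: sub_sigma_algebra; exact: is_ocitv.
    by apply: sub_sigma_algebra; exact: is_ocitv.
  rewrite LS_itv ?ltry //.
  by rewrite lerNl (le_trans _ (ler0n _ _)) // oppr_le0 ler0n.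
Qed.

Lemma ineq_A2 (R : realType) (x y r : R) : 0 < x -> 0 < r ->
  r < Num.sqrt (x ^+ 2 + y ^+ 2) -> x / (x ^+ 2 + y ^+ 2) <= r^-1.
Proof.
move=> x0 r0 hr.
set t := x ^+ 2 + y ^+ 2.
have t0 : 0 <= t by rewrite addr_ge0 // sqr_ge0.
set s := Num.sqrt t in hr.
have st : s ^+ 2 = t by rewrite sqr_sqrtr.
have s0 : 0 <= s by rewrite sqrtr_ge0.
have tp : 0 < t by rewrite -st; nra.
have xs2 : x ^+ 2 <= s ^+ 2 by rewrite st lerDl sqr_ge0.
have xs : x <= s.
  by rewrite -(ler_pXn2r (n:=2)) // ?nnegrE ?ltW.
rewrite ler_pdivrMr // mulrC ler_pdivlMr // -st; nra.
Qed.

Lemma ineq_A1 (R : realType) (x y2 a b : R) : 0 < x -> x <= a -> 0 <= b -> 0 < y2 ->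
  x / (x ^+ 2 + y2) <= (a + b) / y2.
Proof.
move=> x0 xa b0 y0.
have t0 : 0 < x ^+ 2 + y2 by nra.
rewrite ler_pdivrMr // mulrAC ler_pdivlMr //; nra.
Qed.

Lemma mRe (R : realType) : measurable_fun setT (fun z : R * R => (Re_inv z)%:E).
Proof.
apply/measurable_EFinP; rewrite /Re_inv.
apply: measurable_funM; first exact: measurable_fst.
apply: measurableT_comp; first exact: measurable_invR.
apply: measurable_funD; apply: measurable_funX; [exact: measurable_fst|exact: measurable_snd].
Qed.

Lemma mcabs (R : realType) : measurable_fun setT (@cabs R).
Proof.
rewrite /cabs.
apply: measurableT_comp; first exact: continuous_measurable_fun (@sqrt_continuous R).
apply: measurable_funD; apply: measurable_funX; [exact: measurable_fst|exact: measurable_snd].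
Qed.

Lemma mpre (R : realType) (h : R * R -> R) (i : interval R) :
  measurable_fun setT h -> measurable (h @^-1` [set` i]).
Proof.
by move=> mh; rewrite -[X in measurable X]setTI; apply: mh => //; exact: measurable_itv.
Qed.

Lemma mS (R : realType) (r R' : R) : measurable (lrh_set r R').
Proof.
rewrite (_ : lrh_set r R' = (@cabs R) @^-1` [set` `]r, R']] `&` fst @^-1` [set` `]0, +oo[]).
  by apply: measurableI; apply: mpre; [exact: mcabs|exact: measurable_fst].
by apply/seteqP; split => z; rewrite /lrh_set /= !in_itv /= andbT.
Qed.

Theorem lemma3 (R : realType) (r0 : R) (q : R -> R)
  (mu0 : {measure set (R * R) -> \bar R}) (C : R) (F : cumulative R R) :
  0 < r0 ->
  continuous q ->
  (forall y, 0 <= q y) ->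
  (* limsup_{|y| -> +oo} q(y)/|y| < 1 *)
  (exists2 a : R, a < 1 & exists M : R, forall y, M <= `|y| -> q y / `|y| <= a) ->
  (* supp mu0 is contained in the closure of D_q *)
  mu0 (~` closure (Dq q)) = 0%E ->
  (forall y, 0 <= y -> (mu_i mu0 y <= (C * y)%:E)%E) ->
  (* F is the (real-valued) distribution function mu0^i on [0,+oo) *)
  (forall y, 0 <= y -> (F y)%:E = mu_i mu0 y) ->
  exists2 C0 : R, 0 <= C0 &
    forall r R' : R, r0 <= r -> r < R' ->
      (lrh mu0 r R' <=
         \int[lebesgue_stieltjes_measure F]_(y in `]r, R']) ((q y + q (- y)) / y ^+ 2)%:E
         + C0%:E)%E.
Proof.
move=> r00 cq q0 _ mu0N muiC FE.
have C0 : 0 <= C.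
  have := muiC 1 ler01; rewrite mulr1 => h.
  by rewrite -lee_fin (le_trans _ h) // /mu_i measure_ge0.
exists C => // r R' rr0 rR'.
have rp : 0 < r by exact: lt_le_trans r00 rr0.
have mphiR : measurable_fun setT (fun z : R * R => `|z.2|).
  by apply: measurableT_comp; [exact: measurable_realfun.normr_measurable|exact: measurable_snd].
have mphi : measurable_fun setT (fun z : R * R => (`|z.2| : measurableTypeR R)).
  exact: mphiR.
pose g := fun y : R => (q y + q (- y)) / y ^+ 2.
have g0 : forall y, 0 <= g y.
  by move=> y; rewrite /g divr_ge0 // ?addr_ge0 // sqr_ge0.
have mq : measurable_fun setT q := continuous_measurable_fun cq.
have mg : measurable_fun setT (fun y => (g y)%:E).
  apply/measurable_EFinP; apply: measurable_funM.
    apply: measurable_funD => //; apply: measurableT_comp => //; exact: oppr_measurable.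
  apply: measurableT_comp; [exact: measurable_invR | exact: exprn_measurable].
set S := lrh_set r R'.
set A1 := S `&` [set z : R * R | r < `|z.2|].
set A2 := S `&` [set z : R * R | `|z.2| <= r].
have mA1 : measurable A1.
  apply: measurableI; first exact: mS.
  rewrite (_ : [set z | _] = ~` [set z : R * R | `|z.2| <= r]).
    apply: measurableC; exact: mset_le.
  by apply/seteqP; split => z /=; rewrite ltNge => /negP.
have mA2 : measurable A2 by apply: measurableI; [exact: mS|exact: mset_le].
have SE : S = A1 `|` A2.
  rewrite -setIUr (_ : _ `|` _ = setT) ?setIT //.
  by apply/seteqP; split => // z _ /=; case: (ltP r `|z.2|); [left|right].
have fS0 : forall z, S z -> (0 <= (Re_inv z)%:E)%E.
  move=> z [_ z1]; rewrite lee_fin /Re_inv; apply: divr_ge0; [exact: ltW|by rewrite addr_ge0 // sqr_ge0].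

rewrite /lrh -/S SE ge0_integral_setU //; first last.
- rewrite disj_set2E; apply/eqP/seteqP; split => // z [[_ h1] [_ h2]] /=; by have := lt_le_trans h1 h2; rewrite ltxx.
- by rewrite -SE.
- exact: measurable_funTS (mRe R).
apply: leeD; last first.
  apply: (@le_trans _ _ (\int[mu0]_(z in A2) (cst (r^-1)%:E) z)%E).
    apply: ge0_le_integral => //.
    - by move=> z [Sz _]; exact: fS0.
    - exact: measurable_funTS (mRe R).
    - move=> z [[/andP[h1 h2] z1] _]; rewrite lee_fin; exact: ineq_A2.
  rewrite integral_cst //.
  have h : (mu0 A2 <= (C * r)%:E)%E.
    apply: le_trans (muiC r (ltW rp)).
    by apply: le_measure; rewrite ?inE //; [exact: mset_le|exact: subIsetr].
  apply: (le_trans (lee_wpmul2l _ h)); first by rewrite lee_fin invr_ge0 ltW.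
  by rewrite -EFinM lee_fin mulrC -mulrA mulfV ?gt_eqF // mulr1.
have mB : measurable ((fun z : R * R => `|z.2|) @^-1` [set` `]r, R']]).
  exact: mpre.
apply: (@le_trans _ _ (\int[mu0]_(z in A1) (g `|z.2|)%:E)%E).
  apply: ae_ge0_le_integral => //.
  - by move=> z [Sz _]; exact: fS0.
  - exact: measurable_funTS (mRe R).
  - by move=> z _; rewrite lee_fin.
  - apply: measurable_funTS; exact: (measurableT_comp mg mphiR).
  exists (~` closure (Dq q)); split => //.
    apply: open_measurableRR; apply: closed_openC; exact: closed_closure.
  move=> z /= nP cz; apply: nP => -[[/andP[h1 h2] z1] hy].
  have xq := @closure_Dq_le R q cq z cz; rewrite /= in xq.
  rewrite lee_fin /Re_inv /g.
  have -> : q `|z.2| + q (- `|z.2|) = q z.2 + q (- z.2).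
    by case: (leP 0 z.2) => y0; [rewrite ger0_norm|rewrite ltr0_norm ?opprK 1?addrC].
  rewrite -[z.2 ^+ 2](real_normK (num_real z.2)).
  apply: ineq_A1 => //.
  by rewrite exprn_gt0 // (lt_trans rp hy).
apply: (le_trans (@ge0_subset_integral _ _ R mu0 A1 _ mA1 mB (fun z => (g `|z.2|)%:E) _ _ _)).
  - apply: measurable_funTS; exact: (measurableT_comp mg mphiR).
  - by move=> z _; rewrite lee_fin.
  - move=> z [[/andP[h1 h2] z1] hy] /=; rewrite in_itv /= hy /=.
    apply: le_trans h2; rewrite /cabs -sqrtr_sqr ler_sqrt ?lerDl ?sqr_ge0 //.
      by rewrite lerDr sqr_ge0.
    by rewrite addr_ge0 // sqr_ge0.
rewrite le_eqVlt; apply/orP; left; apply/eqP.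
have := @ge0_integral_pushforward _ _ _ _ R _ mphi mu0 (`]r, R']%classic) (fun y => (g y)%:E).
move=> <- //; last first.
  - by move=> y _; rewrite lee_fin.
  - by apply: measurable_funTS; exact: mg.
apply: eq_measure_integral => A mA AD.
have := @LS_push R F mu0 r R' rp FE A mA AD. move=> h; exact: (esym h).
Qed.
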